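(* Let $\mathscr{X}$ be a complex Banach space and $\mathcal{T}\subseteq\mathcal{B}(\mathscr{X})$ a non-empty set of operators. (i) For $\mathcal{A}=\mathrm{Alg}\,\mathrm{Lat}(\mathcal{T})$ we have $\mathrm{Col}(\mathcal{A})\subseteq\mathrm{Col}(\mathcal{A}\cap\mathcal{A}')$. (ii) If $\mathcal{T}'$ and $\mathcal{T}''$ are reflexive algebras, then $\mathrm{Col}(\mathcal{T}')=\mathrm{Col}(\mathcal{T}'')$.
   Context: $\mathcal{T}'$ is the commutant of $\mathcal{T}$ (operators commuting with all elements of $\mathcal{T}$) and $\mathcal{T}''=(\mathcal{T}')'$. $\mathrm{Lat}(\mathcal{T})$ is the set of closed subspaces invariant for all operators in $\mathcal{T}$; $\mathrm{Alg}(\mathfrak{F})$ is the set of operators leaving every subspace in $\mathfrak{F}$ invariant. A subalgebra $\mathcal{A}$ is reflexive if $\mathrm{Alg}\,\mathrm{Lat}(\mathcal{A})=\mathcal{A}$. For a set $\mathcal{S}$ of operators, $\mathrm{Col}(\mathcal{S})$ is the group of invertible $S\in\mathcal{B}(\mathscr{X})$ such that for every closed subspace $\mathscr{M}$: $\mathscr{M}\in\mathrm{Lat}(\mathcal{S})$ iff $S\mathscr{M}\in\mathrm{Lat}(\mathcal{S})$. *)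

(* Defs.v *)
From HB Require Import structures.
From mathcomp Require Import all_boot all_order all_algebra.
From mathcomp Require Import all_classical all_reals all_analysis.
From mathcomp Require Import complex.
Set Implicit Arguments. Unset Strict Implicit. Unset Printing Implicit Defensive.
Import Order.TTheory GRing.Theory Num.Theory.
Import numFieldNormedType.Exports.
Local Open Scope classical_set_scope.
Local Open Scope ring_scope.

(* Operators are represented as functions X -> X; B(X) is the set of
   bounded (= continuous) linear maps. *)

Section Defs.
Context {R : realType} {X : completeNormedModType R[i]}.

Definition bounded_op (T : X -> X) : Prop :=
  (forall (a : R[i]) (x y : X), T (a *: x + y) = a *: T x + T y) /\ continuous T.

Definition closed_subspace (M : set X) : Prop :=
  [/\ M 0, (forall (a : R[i]) x y, M x -> M y -> M (a *: x + y)) & closed M].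

Definition Lat (S : set (X -> X)) : set (set X) :=
  [set M | closed_subspace M /\ forall T, S T -> T @` M `<=` M].

Definition Alg (F : set (set X)) : set (X -> X) :=
  [set T | bounded_op T /\ forall M, F M -> T @` M `<=` M].

Definition commutant (S : set (X -> X)) : set (X -> X) :=
  [set A | bounded_op A /\ forall T, S T -> A \o T = T \o A].

Definition subalgebra (A : set (X -> X)) : Prop :=
  [/\ A `<=` bounded_op, A id,
      (forall (a : R[i]) S T, A S -> A T -> A (fun x => a *: S x + T x)) &
      (forall S T, A S -> A T -> A (S \o T))].

Definition reflexive_alg (A : set (X -> X)) : Prop :=
  subalgebra A /\ Alg (Lat A) = A.

Definition invertible_op (S : X -> X) : Prop :=
  bounded_op S /\ exists S' : X -> X, bounded_op S' /\ S \o S' = id /\ S' \o S = id.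

Definition Col (S : set (X -> X)) : set (X -> X) :=
  [set V | invertible_op V /\
     forall M : set X, closed_subspace M -> (Lat S M <-> Lat S (V @` M))].

End Defs.

(* Main.v *)
Require Import Defs.
From HB Require Import structures.
From mathcomp Require Import all_boot all_order all_algebra.
From mathcomp Require Import all_classical all_reals all_analysis.
From mathcomp Require Import complex.
Import Order.TTheory GRing.Theory Num.Theory.
Import numFieldNormedType.Exports.
Local Open Scope classical_set_scope.
Local Open Scope ring_scope.

Section Aux.
Context {R : realType} {X : completeNormedModType R[i]}.

Lemma bounded_comp (F G : X -> X) :
  @bounded_op R X F -> @bounded_op R X G -> @bounded_op R X (F \o G).
Proof.
move=> [lF cF] [lG cG]; split.
  by move=> a x y /=; rewrite lG lF.
by move=> x; apply: continuous_comp; [exact: cG | exact: cF].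
Qed.

Definition stable (V W : X -> X) (S : set (X -> X)) :=
  forall B, S B -> S (V \o B \o W) /\ S (W \o B \o V).

Lemma image_cs (V W : X -> X) (M : set X) :
  @bounded_op R X V -> @bounded_op R X W -> V \o W = id -> W \o V = id ->
  @closed_subspace R X M -> @closed_subspace R X (V @` M).
Proof.
move=> [lV cV] [lW cW] VW WV [M0 Ml Mc].
have WVx : forall x, W (V x) = x by move=> x; exact: (congr1 (fun f => f x) WV).
have VWx : forall x, V (W x) = x by move=> x; exact: (congr1 (fun f => f x) VW).
have -> : V @` M = W @^-1` M.
  apply/seteqP; split => x /=.
    by move=> [m Mm <-]; rewrite WVx.
  by move=> Mx; exists (W x) => //; rewrite VWx.
split => /=.
- have V0 : V 0 = 0.
    have := lV 1 0 0; rewrite !scale1r !addr0 => h.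
    by apply: (addrI (V 0)); rewrite addr0 -h.
  have W0 : W 0 = 0 by rewrite -V0 WVx.
  by rewrite W0.
- by move=> a x y Mx My; rewrite lW; apply: Ml.
- by apply: preimage_closed => // x _; apply: cW.
Qed.

Lemma core (A : set (X -> X)) (V W : X -> X) :
  Alg (Lat A) = A -> @bounded_op R X V -> @bounded_op R X W ->
  V \o W = id -> W \o V = id ->
  (forall M : set X, closed_subspace M -> (Lat A M <-> Lat A (V @` M))) ->
  stable V W A.
Proof.
move=> eA bV bW VW WV hC B AB.
have WVx : forall x, W (V x) = x by move=> x; exact: (congr1 (fun f => f x) WV).
have VWx : forall x, V (W x) = x by move=> x; exact: (congr1 (fun f => f x) VW).
have : Alg (Lat A) B by rewrite eA.
move=> [bB hB].
split; rewrite -eA; split.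
- by apply: bounded_comp => //; apply: bounded_comp.
- move=> N LN _ [x Nx <-] /=.
  have csM : closed_subspace (W @` N) by apply: (@image_cs W V N bW bV WV VW); case: LN.
  have eVM : V @` (W @` N) = N.
    apply/seteqP; split => y /=.
      by move=> [z [n Nn <-] <-]; rewrite VWx.
    by move=> Ny; exists (W y); [exists y | rewrite VWx].
  have LM : Lat A (W @` N) by apply/(hC _ csM); rewrite eVM.
  have : (W @` N) (B (W x)) by apply: (hB _ LM); exists (W x) => //; exists x.
  by move=> [n Nn <-]; rewrite VWx.
- by apply: bounded_comp => //; apply: bounded_comp.
- move=> N LN _ [x Nx <-] /=.
  have LVN : Lat A (V @` N) by apply: (hC N (proj1 LN)).1.
  have : (V @` N) (B (V x)) by apply: (hB _ LVN); exists (V x) => //; exists x.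
  by move=> [n Nn <-]; rewrite WVx.
Qed.

Lemma stable_commutant (S : set (X -> X)) (V W : X -> X) :
  @bounded_op R X V -> @bounded_op R X W ->
  V \o W = id -> W \o V = id -> stable V W S -> stable V W (commutant S).
Proof.
move=> bV bW VW WV hS C [bC hC].
have WVx : forall x, W (V x) = x by move=> x; exact: (congr1 (fun f => f x) WV).
have VWx : forall x, V (W x) = x by move=> x; exact: (congr1 (fun f => f x) VW).
split; split.
- by apply: bounded_comp => //; apply: bounded_comp.
- move=> B SB; have [_ h] := hS B SB.
  have hc := hC _ h.
  apply: funext => x /=.
  have := congr1 (fun f => f (W x)) hc => /= e.
  rewrite VWx in e.
  by rewrite e VWx.
- by apply: bounded_comp => //; apply: bounded_comp.
- move=> B SB; have [h _] := hS B SB.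
  have hc := hC _ h.
  apply: funext => x /=.
  have := congr1 (fun f => f (V x)) hc => /= e.
  rewrite WVx in e.
  by rewrite e WVx.
Qed.

Lemma Col_of_stable (S : set (X -> X)) (V W : X -> X) :
  @bounded_op R X V -> @bounded_op R X W ->
  V \o W = id -> W \o V = id -> stable V W S -> Col S V.
Proof.
move=> bV bW VW WV hS.
have WVx : forall x, W (V x) = x by move=> x; exact: (congr1 (fun f => f x) WV).
have VWx : forall x, V (W x) = x by move=> x; exact: (congr1 (fun f => f x) VW).
split; first by split=> //; exists W.
move=> M csM; split.
- move=> [_ hM]; split; first exact: (@image_cs V W M bV bW VW WV csM).
  move=> B SB _ [_ [m Mm <-] <-].
  have [_ h] := hS B SB.
  have : ((W \o B \o V) @` M) (W (B (V m))) by exists m.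
  move=> /(hM _ h) Mw; exists (W (B (V m))) => //; exact: VWx.
- move=> [_ hM]; split => //.
  move=> B SB _ [m Mm <-].
  have [h _] := hS B SB.
  have : (V @` M) (V (B (W (V m)))).
    by apply: (hM _ h); exists (V m) => //; exists m.
  move=> [m' Mm' e].
  have := congr1 W e; rewrite !WVx => <-; exact: Mm'.
Qed.
Lemma stableI (S1 S2 : set (X -> X)) V W :
  stable V W S1 -> stable V W S2 -> stable V W (S1 `&` S2).
Proof.
move=> h1 h2 B [/h1 [a b] /h2 [c d]]; by split; split.
Qed.

Lemma AlgLatAlg (F : set (set X)) : F `<=` @closed_subspace R X ->
  Alg (Lat (Alg F)) = Alg F.
Proof.
move=> hF; apply/seteqP; split => B [bB hB]; split => //.
- move=> M FM; apply: hB; split; first exact: hF.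
  by move=> C [_ hC]; apply: hC.
- by move=> N [_ hN]; apply: hN.
Qed.

Lemma commutant3 (S : set (X -> X)) : S `<=` @bounded_op R X ->
  commutant (commutant (commutant S)) = commutant S.
Proof.
move=> hS; apply/seteqP; split => C [bC hC]; split => //.
- move=> B SB; apply: hC; split; first exact: hS.
  by move=> D [_ hD]; rewrite (hD _ SB).
- by move=> E [_ hE]; rewrite (hE _ (conj bC hC)).
Qed.
End Aux.

Theorem corollary3p11 (R : realType) (X : completeNormedModType R[i])
  (T : set (X -> X)) :
  T `<=` @bounded_op R X -> T !=set0 ->
  (let A := Alg (Lat T) in Col A `<=` Col (A `&` commutant A)) /\
  (reflexive_alg (commutant T) -> reflexive_alg (commutant (commutant T)) ->
   Col (commutant T) = Col (commutant (commutant T))).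
Proof.
move=> hT _; split.
  move=> A V [[bV [W [bW [VW WV]]]] hC].
  have eA : Alg (Lat A) = A by apply: AlgLatAlg => M [].
  have sA : stable V W A by exact: core.
  apply: (@Col_of_stable _ _ _ V W bV bW VW WV); apply: stableI => //.
  exact: stable_commutant.
move=> [_ e1] [_ e2]; apply/seteqP; split.
  move=> V [[bV [W [bW [VW WV]]]] hC].
  have sA : stable V W (commutant T) by exact: core.
  apply: (@Col_of_stable _ _ _ V W bV bW VW WV); exact: stable_commutant.
move=> V [[bV [W [bW [VW WV]]]] hC].
have sA : stable V W (commutant (commutant T)) by exact: core.
rewrite -(@commutant3 _ _ T hT).
apply: (@Col_of_stable _ _ _ V W bV bW VW WV); exact: stable_commutant.
Qed.
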